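(* Let $n_1,\dots,n_m$ be positive integers, $w=n_1+\dots+n_m$, and $x_1,\dots,x_m\in\mathbb C$ with $|x_i|<1$. Then $$\mathrm{Li}_{n_1,\dots,n_m}(x_1,\dots,x_m)=\int_{C_w}\Omega_{n_1,\dots,n_m}(x_1,\dots,x_m).$$
   Context: $\mathrm{Li}_{n_1,\dots,n_m}(x_1,\dots,x_m)=\sum_{0<k_1<\dots<k_m}\frac{x_1^{k_1}\cdots x_m^{k_m}}{k_1^{n_1}\cdots k_m^{n_m}}$. Put $N_k=n_1+\dots+n_k$ ($N_0=0$). Let $u_1,\dots,u_w$ be coordinates on $\mathbb A^w$ and $C_w=[0,1]^w$ the standard cube in the $u$-coordinates with its standard orientation. Define $v_j=x_ku_j$ if $j=N_k$ for some $k\ge1$, and $v_j=u_j$ otherwise. For $1\le j\le w$ put $P_j=v_jv_{j+1}\cdots v_w$. Then $\Omega_{n_1,\dots,n_m}(x_1,\dots,x_m)=\eta_1\wedge\eta_2\wedge\cdots\wedge\eta_w$, where $\eta_j=\frac{dP_j}{1-P_j}$ if $j=N_k+1$ for some $k\in\{0,\dots,m-1\}$ (the first index of a block) and $\eta_j=\frac{dP_j}{P_j}$ otherwise; the integral over $C_w$ is the integral of the pullback of this form under $u\mapsto v$. (E.g. for $m=1,n_1=2$: $\Omega_2(x)=\frac{d(v_1v_2)}{1-v_1v_2}\wedge\frac{dv_2}{v_2}$ with $v_1=u_1,v_2=xu_2$.) *)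

(* Defs.v *)
From Stdlib Require Import Reals Arith List.
From Coquelicot Require Export Coquelicot.
Open Scope R_scope.

(* Li_trunc ns xs a K = sum over a < k_1 < ... < k_m <= K of
   prod_i x_i^{k_i} / k_i^{n_i}   (with ns = [n_1..n_m], xs = [x_1..x_m]). *)
Fixpoint Li_trunc (ns : list nat) (xs : list C) (a K : nat) : C :=
  match ns, xs with
  | n :: ns', x :: xs' =>
      sum_n_m (fun k : nat =>
                 Cmult (Cdiv (pow_n x k) (RtoC (INR k ^ n))) (Li_trunc ns' xs' k K))
              (S a) K
  | _, _ => RtoC 1
  end.

Definition is_Li (ns : list nat) (xs : list C) (l : C) : Prop :=
  filterlim (fun K => Li_trunc ns xs 0 K) eventually (locally l).

Definition weight (ns : list nat) : nat := list_sum ns.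

(* multiplier c_j : v_j = c_j u_j, with c_j = x_k if j = N_k (k >= 1), else 1;
   off is the running partial sum N_{k-1}. *)
Fixpoint cmult_aux (ns : list nat) (xs : list C) (off j : nat) : C :=
  match ns, xs with
  | n :: ns', x :: xs' =>
      if Nat.eqb j (off + n) then x else cmult_aux ns' xs' (off + n) j
  | _, _ => RtoC 1
  end.
Definition cmult (ns : list nat) (xs : list C) (j : nat) : C := cmult_aux ns xs 0 j.

(* j is the first index of a block: j = N_k + 1 for some k in {0..m-1} *)
Fixpoint is_start_aux (ns : list nat) (off j : nat) : bool :=
  match ns with
  | n :: ns' => Nat.eqb j (off + 1) || is_start_aux ns' (off + n) j
  | nil => false
  end.
Definition is_start (ns : list nat) (j : nat) : bool := is_start_aux ns 0 j.

(* u : nat -> R are the coordinates u_1, ..., u_w (1-based). *)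
Definition vcoord (ns : list nat) (xs : list C) (u : nat -> R) (j : nat) : C :=
  Cmult (cmult ns xs j) (RtoC (u j)).

Fixpoint cprod (f : nat -> C) (a len : nat) : C :=
  match len with
  | O => RtoC 1
  | S len' => Cmult (f a) (cprod f (S a) len')
  end.

Definition Pj (ns : list nat) (xs : list C) (j : nat) (u : nat -> R) : C :=
  cprod (vcoord ns xs u) j (weight ns + 1 - j).

Definition upd (u : nat -> R) (i : nat) (t : R) : nat -> R :=
  fun k => if Nat.eqb k i then t else u k.

Definition pderiv (f : (nat -> R) -> C) (u : nat -> R) (i : nat) : C :=
  (Derive (fun t => fst (f (upd u i t))) (u i),
   Derive (fun t => snd (f (upd u i t))) (u i)).

Fixpoint cdet (n : nat) (M : nat -> nat -> C) : C :=
  match n with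
  | O => RtoC 1
  | S n' =>
      sum_n_m (fun i : nat =>
        Cmult (Cmult (RtoC ((-1) ^ i)) (M O i))
              (cdet n' (fun r c => M (S r) (if Nat.ltb c i then c else S c))))
        0 n'
  end.

(* coefficient of eta_j : dP_j/(1-P_j) at block starts, dP_j/P_j otherwise *)
Definition eta_coef (ns : list nat) (xs : list C) (j : nat) (u : nat -> R) : C :=
  if is_start ns j then Cinv (Cminus (RtoC 1) (Pj ns xs j u))
  else Cinv (Pj ns xs j u).

(* Pullback of Omega = eta_1 /\ ... /\ eta_w under u |-> v, written as
   density(u) du_1 /\ ... /\ du_w:
   density = (prod_j coef_j) * det (dP_j / du_i)_{j,i}. *)
Definition Omega_density (ns : list nat) (xs : list C) (u : nat -> R) : C :=
  Cmult (cprod (fun j => eta_coef ns xs j u) 1 (weight ns))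
        (cdet (weight ns) (fun r c => pderiv (Pj ns xs (S r)) u (S c))).

Fixpoint cube_int (w : nat) (F : (nat -> R) -> C) : C :=
  match w with
  | O => F (fun _ => 0)
  | S w' => RInt (V := C_R_CompleteNormedModule)
              (fun t => cube_int w' (fun u => F (upd u (S w') t))) 0 1
  end.

(* Main.v *)
Require Import Defs.
From Stdlib Require Import Reals Arith List Lia Lra FunctionalExtensionality Classical_Prop.
From Coquelicot Require Import Coquelicot.
Open Scope R_scope.

Notation CC := C_R_CompleteNormedModule.

Fixpoint ci (l : list nat) (F : (nat -> R) -> C) (u0 : nat -> R) : C :=
  match l with
  | nil => F u0
  | i :: l' => RInt (V := CC) (fun t => ci l' F (upd u0 i t)) 0 1
  end.

Fixpoint cgood (l : list nat) (F : (nat -> R) -> C) (u0 : nat -> R) : Prop :=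
  match l with
  | nil => True
  | i :: l' => ex_RInt (V := CC) (fun t => ci l' F (upd u0 i t)) 0 1 /\
               forall t, 0 < t < 1 -> cgood l' F (upd u0 i t)
  end.

Definition ci_is l F u0 v := cgood l F u0 /\ ci l F u0 = v.

Fixpoint inR (l : list nat) (u0 u : nat -> R) : Prop :=
  match l with
  | nil => u = u0
  | i :: l' => exists t, 0 < t < 1 /\ inR l' (upd u0 i t) u
  end.

Lemma minmax01 : forall x, Rmin 0 1 < x < Rmax 0 1 -> 0 < x < 1.
Proof. intros x H. rewrite Rmin_left in H by lra. rewrite Rmax_right in H by lra. exact H. Qed.

Lemma ci_cons : forall i l F u0 g v,
  (forall t, 0 < t < 1 -> ci_is l F (upd u0 i t) (g t)) ->
  is_RInt (V := CC) g 0 1 v -> ci_is (i :: l) F u0 v.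
Proof.
  intros i l F u0 g v Hg Hi. split; [split|].
  - apply (ex_RInt_ext (V := CC) g). intros x Hx. apply minmax01 in Hx.
    destruct (Hg x Hx) as [_ E]; symmetry; exact E. exists v; exact Hi.
  - intros t Ht. apply (Hg t Ht).
  - simpl. rewrite (RInt_ext (V := CC) _ g). exact (is_RInt_unique (V := CC) g 0 1 v Hi).
    intros x Hx; apply minmax01 in Hx; apply (Hg x Hx).
Qed.

Lemma ci_is_cons_inv : forall i l F u0 v, ci_is (i :: l) F u0 v ->
  is_RInt (V := CC) (fun t => ci l F (upd u0 i t)) 0 1 v /\
  forall t, 0 < t < 1 -> ci_is l F (upd u0 i t) (ci l F (upd u0 i t)).
Proof.
  intros i l F u0 v [[He Hg] Hv]. split.
  - simpl in Hv. rewrite <- Hv. apply RInt_correct. exact He.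
  - intros t Ht. split; auto.
Qed.

Lemma ci_ext : forall l F G u0, (forall u, inR l u0 u -> F u = G u) ->
  ci l F u0 = ci l G u0.
Proof.
  induction l as [|i l IH]; intros F G u0 H; simpl.
  - apply H. reflexivity.
  - apply (RInt_ext (V := CC)). intros x Hx; apply minmax01 in Hx. apply IH.
    intros u Hu. apply H. exists x. split; auto.
Qed.

Lemma ci_is_ext : forall l F G u0 v, (forall u, inR l u0 u -> F u = G u) ->
  ci_is l F u0 v -> ci_is l G u0 v.
Proof.
  induction l as [|i l IH]; intros F G u0 v H Hc.
  - destruct Hc as [_ Hv]. split; [exact I|]. simpl in *. rewrite <- H; auto.
  - apply ci_is_cons_inv in Hc. destruct Hc as [Hi Ht].
    apply ci_cons with (g := fun t => ci l F (upd u0 i t)); auto.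
    intros t Htt. apply IH with F; auto. intros u Hu; apply H. exists t; auto.
Qed.

Lemma is_RInt_lin2 : forall (f g : R -> R) a b lf lg p q,
  is_RInt (V := R_NormedModule) f a b lf -> is_RInt (V := R_NormedModule) g a b lg ->
  is_RInt (V := R_NormedModule) (fun t => p * f t + q * g t) a b (p * lf + q * lg).
Proof.
  intros f g a b lf lg p q Hf Hg.
  exact (is_RInt_plus (V := R_NormedModule) _ _ a b _ _
     (is_RInt_scal (V := R_NormedModule) f a b p lf Hf)
     (is_RInt_scal (V := R_NormedModule) g a b q lg Hg)).
Qed.

Lemma is_RInt_Cmult : forall (f : R -> C) a b (l c : C),
  is_RInt (V := CC) f a b l -> is_RInt (V := CC) (fun t => Cmult c (f t)) a b (Cmult c l).
Proof.
  intros f a b l c H.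
  assert (H1 := is_RInt_fct_extend_fst (U := R_NormedModule) (V := R_NormedModule) f a b l H).
  assert (H2 := is_RInt_fct_extend_snd (U := R_NormedModule) (V := R_NormedModule) f a b l H).
  destruct c as [c1 c2]. destruct l as [l1 l2]. simpl in H1, H2.
  apply (is_RInt_fct_extend_pair (U := R_NormedModule) (V := R_NormedModule)); simpl.
  - assert (K := is_RInt_lin2 _ _ a b _ _ c1 (- c2) H1 H2).
    replace (c1 * l1 - c2 * l2) with (c1 * l1 + - c2 * l2) by ring.
    eapply (is_RInt_ext (V := R_NormedModule)); [|exact K]. intros x _. simpl. ring.
  - assert (K := is_RInt_lin2 _ _ a b _ _ c1 c2 H2 H1).
    replace (c1 * l2 + c2 * l1) with (c1 * l2 + c2 * l1) by ring.
    eapply (is_RInt_ext (V := R_NormedModule)); [|exact K]. intros x _. simpl. ring.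
Qed.

Lemma is_RInt_RtoC : forall (f : R -> R) a b l,
  is_RInt (V := R_NormedModule) f a b l -> is_RInt (V := CC) (fun t => RtoC (f t)) a b (RtoC l).
Proof.
  intros f a b l H.
  apply (is_RInt_fct_extend_pair (U := R_NormedModule) (V := R_NormedModule)); simpl.
  - exact H.
  - assert (K := is_RInt_const (V := R_NormedModule) a b 0).
    unfold scal in K; simpl in K; unfold mult in K; simpl in K. rewrite Rmult_0_r in K. exact K.
Qed.

Lemma is_RInt_eq_val : forall (f : R -> C) a b (l l' : C),
  is_RInt (V := CC) f a b l -> l = l' -> is_RInt (V := CC) f a b l'.
Proof. intros; subst; auto. Qed.

Lemma ci_is_nil : forall F u0, ci_is nil F u0 (F u0).
Proof. intros; split; simpl; auto. Qed.

Lemma ci_is_scal : forall l F u0 v c, ci_is l F u0 v ->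
  ci_is l (fun u => Cmult c (F u)) u0 (Cmult c v).
Proof.
  induction l as [|i l IH]; intros F u0 v c H.
  - destruct H as [_ H]; simpl in H; subst; apply ci_is_nil.
  - apply ci_is_cons_inv in H; destruct H as [Hi Ht].
    apply ci_cons with (g := fun t => Cmult c (ci l F (upd u0 i t))).
    + intros t Htt. apply IH. apply Ht; auto.
    + apply is_RInt_Cmult. exact Hi.
Qed.

Lemma ci_is_plus : forall l F G u0 v w, ci_is l F u0 v -> ci_is l G u0 w ->
  ci_is l (fun u => Cplus (F u) (G u)) u0 (Cplus v w).
Proof.
  induction l as [|i l IH]; intros F G u0 v w H1 H2.
  - destruct H1 as [_ H1]; destruct H2 as [_ H2]; simpl in *; subst; apply ci_is_nil.
  - apply ci_is_cons_inv in H1; destruct H1 as [Hi1 Ht1].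
    apply ci_is_cons_inv in H2; destruct H2 as [Hi2 Ht2].
    apply ci_cons with (g := fun t => Cplus (ci l F (upd u0 i t)) (ci l G (upd u0 i t))).
    + intros t Htt. apply IH; auto.
    + exact (is_RInt_plus (V := CC) _ _ 0 1 _ _ Hi1 Hi2).
Qed.

Lemma is_RInt_C_const : forall c : C, is_RInt (V := CC) (fun _ => c) 0 1 c.
Proof.
  intros c. pose proof (is_RInt_const (V := CC) 0 1 c) as K.
  eapply is_RInt_eq_val; [exact K|].
  destruct c as [c1 c2]. unfold scal; simpl. unfold prod_scal; simpl.
  unfold scal; simpl; unfold mult; simpl. f_equal; ring.
Qed.

Lemma ci_is_const : forall l u0 (c : C), ci_is l (fun _ => c) u0 c.
Proof.
  induction l as [|i l IH]; intros u0 c.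
  - apply ci_is_nil.
  - apply ci_cons with (g := fun _ => c). intros; apply IH. apply is_RInt_C_const.
Qed.

Lemma ci_is_val : forall l F u0 v v', ci_is l F u0 v -> v = v' -> ci_is l F u0 v'.
Proof. intros; subst; auto. Qed.

Lemma ci_is_sum : forall l (F : nat -> (nat -> R) -> C) u0 (v : nat -> C) n m,
  (forall k, (n <= k <= m)%nat -> ci_is l (F k) u0 (v k)) ->
  ci_is l (fun u => sum_n_m (fun k => F k u) n m) u0 (sum_n_m v n m).
Proof.
  intros l F u0 v n m. induction m as [|m IH]; intros H.
  - destruct n.
    + eapply ci_is_val; [eapply ci_is_ext; [|apply (H 0%nat); lia]|].
      intros u _. rewrite sum_n_n. reflexivity. rewrite sum_n_n. reflexivity.
    + eapply ci_is_val; [eapply ci_is_ext; [|apply (ci_is_const l u0 zero)]|].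
      intros u _. rewrite sum_n_m_zero by lia. reflexivity.
      rewrite sum_n_m_zero by lia. reflexivity.
  - destruct (le_lt_dec n (S m)) as [Hn|Hn].
    + destruct (le_lt_dec n m) as [Hn'|Hn'].
      * assert (A1 := IH (fun k Hk => H k ltac:(lia))).
        assert (A2 := H (S m) ltac:(lia)).
        assert (A3 := ci_is_plus _ _ _ _ _ _ A1 A2).
        eapply ci_is_val; [eapply ci_is_ext; [|exact A3]|].
        intros u _. rewrite sum_n_Sm by lia. reflexivity.
        rewrite sum_n_Sm by lia. reflexivity.
      * assert (n = S m) by lia. subst n.
        eapply ci_is_val; [eapply ci_is_ext; [|apply (H (S m)); lia]|].
        intros u _. rewrite sum_n_n. reflexivity. rewrite sum_n_n. reflexivity.
    + eapply ci_is_val; [eapply ci_is_ext; [|apply (ci_is_const l u0 zero)]|].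
      intros u _. rewrite sum_n_m_zero by lia. reflexivity.
      rewrite sum_n_m_zero by lia. reflexivity.
Qed.

Lemma ci_is_app : forall l1 l2 F G u0 v,
  (forall u, inR l1 u0 u -> ci_is l2 F u (G u)) -> ci_is l1 G u0 v ->
  ci_is (l1 ++ l2) F u0 v.
Proof.
  induction l1 as [|i l1 IH]; intros l2 F G u0 v H1 H2.
  - destruct H2 as [_ H2]; simpl in H2; subst. apply H1. reflexivity.
  - apply ci_is_cons_inv in H2; destruct H2 as [Hi Ht].
    simpl. apply ci_cons with (g := fun t => ci l1 G (upd u0 i t)); auto.
    intros t Htt. apply IH with G; auto.
    intros u Hu; apply H1. exists t; auto.
Qed.

Lemma inR_out : forall l u0 u, inR l u0 u -> forall j, ~ In j l -> u j = u0 j.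
Proof.
  induction l as [|i l IH]; intros u0 u H j Hj; simpl in H.
  - subst; reflexivity.
  - destruct H as [t [Ht Hu]]. rewrite (IH _ _ Hu j).
    unfold upd. destruct (Nat.eqb_spec j i); auto. subst; exfalso; apply Hj; left; auto.
    intro; apply Hj; right; auto.
Qed.

Lemma inR_in : forall l u0 u, inR l u0 u -> forall j, In j l -> 0 < u j < 1.
Proof.
  induction l as [|i l IH]; intros u0 u H j Hj; simpl in H.
  - destruct Hj.
  - destruct H as [t [Ht Hu]].
    destruct (in_dec Nat.eq_dec j l) as [Hin|Hnin].
    + eapply IH; eauto.
    + destruct Hj as [Hj|Hj]; [|contradiction]. subst j.
      rewrite (inR_out _ _ _ Hu i Hnin). unfold upd. rewrite Nat.eqb_refl. auto.
Qed.

Lemma normCC : forall z : C, norm (K := R_AbsRing) (V := CC) z = Cmod z.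
Proof. intros z. exact (eq_sym (Cmod_norm z)). Qed.

Definition cut (h : R -> C) (t : R) : C :=
  if Rlt_dec 0 t then (if Rlt_dec t 1 then h t else RtoC 0) else RtoC 0.

Lemma cut_in : forall h t, 0 < t < 1 -> cut h t = h t.
Proof. intros h t [H1 H2]; unfold cut; destruct (Rlt_dec 0 t); destruct (Rlt_dec t 1); try lra; auto. Qed.
Lemma cut_out : forall h t, ~ (0 < t < 1) -> cut h t = RtoC 0.
Proof. intros h t H; unfold cut; destruct (Rlt_dec 0 t); destruct (Rlt_dec t 1); auto. exfalso; auto. Qed.

Lemma inR_nonempty : forall l u0, exists u, inR l u0 u.
Proof.
  induction l as [|i l IH]; intros u0.
  - exists u0; reflexivity.
  - destruct (IH (upd u0 i (1/2))) as [u Hu]. exists u, (1/2). split; auto; lra.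
Qed.

Lemma ci_lim : forall l u0 (FK : nat -> (nat -> R) -> C) (F : (nat -> R) -> C) (v : nat -> C),
  (forall K, ci_is l (FK K) u0 (v K)) ->
  (forall eps, 0 < eps -> exists N, forall K, (N <= K)%nat -> forall u, inR l u0 u ->
       Cmod (Cminus (FK K u) (F u)) <= eps) ->
  exists vl, ci_is l F u0 vl /\
   forall eps N, (forall K, (N <= K)%nat -> forall u, inR l u0 u ->
                    Cmod (Cminus (FK K u) (F u)) <= eps) ->
     forall K, (N <= K)%nat -> Cmod (Cminus (v K) vl) <= eps.
Proof.
  induction l as [|i l IH]; intros u0 FK F v H1 H2.
  - exists (F u0). split. apply ci_is_nil.
    intros eps N Hr K HK. destruct (H1 K) as [_ E]. simpl in E. rewrite <- E.
    apply Hr; auto. reflexivity.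
  - assert (IHt : forall t, 0 < t < 1 ->
      ci_is l F (upd u0 i t) (ci l F (upd u0 i t)) /\
      forall eps N, (forall K, (N <= K)%nat -> forall u, inR l (upd u0 i t) u ->
                    Cmod (Cminus (FK K u) (F u)) <= eps) ->
      forall K, (N <= K)%nat -> Cmod (Cminus (ci l (FK K) (upd u0 i t)) (ci l F (upd u0 i t))) <= eps).
    { intros t Ht.
      destruct (IH (upd u0 i t) FK F (fun K => ci l (FK K) (upd u0 i t))) as [vl [Hvl Hrate]].
      - intros K. destruct (ci_is_cons_inv _ _ _ _ _ (H1 K)) as [_ HH]. apply HH; auto.
      - intros eps Heps. destruct (H2 eps Heps) as [N HN]. exists N.
        intros K HK u Hu. apply HN; auto. exists t; auto.
      - assert (E : ci l F (upd u0 i t) = vl) by (destruct Hvl; auto).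
        rewrite E. split; auto. }
    set (gK := fun K => cut (fun t => ci l (FK K) (upd u0 i t))).
    set (wt := cut (fun t => ci l F (upd u0 i t))).
    assert (HgK : forall K, is_RInt (V := CC) (gK K) 0 1 (v K)).
    { intros K. destruct (ci_is_cons_inv _ _ _ _ _ (H1 K)) as [HH _].
      eapply (is_RInt_ext (V := CC)); [|exact HH].
      intros x Hx; apply minmax01 in Hx. unfold gK. rewrite cut_in; auto. }
    assert (Hlim : filterlim gK eventually (locally (T := fct_UniformSpace R CC) wt)).
    { intros P [eps HP]. destruct (H2 (eps / 2)) as [N HN].
      destruct eps; simpl; lra.
      exists N. intros K HK. apply HP. intros t.
      destruct (Rlt_dec 0 t) as [Ha|Ha]; [destruct (Rlt_dec t 1) as [Hb|Hb]|].
      - assert (Ht : 0 < t < 1) by lra.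
        unfold gK, wt. rewrite !cut_in by auto.
        apply (norm_compat1 (V := CC)). rewrite <- Cmod_norm.
        apply Rle_lt_trans with (eps / 2).
        apply (proj2 (IHt t Ht)) with N; auto.
        intros K' HK' u Hu. apply HN; auto. exists t; auto.
        destruct eps; simpl; lra.
      - unfold gK, wt. rewrite !cut_out by lra. apply ball_center.
      - unfold gK, wt. rewrite !cut_out by lra. apply ball_center. }
    destruct (filterlim_RInt (V := CC) gK 0 1 eventually eventually_filter wt v HgK Hlim) as [If [HIf HIw]].
    exists If. split.
    + apply ci_cons with (g := wt); auto.
      intros t Ht. unfold wt. rewrite cut_in by auto. apply (IHt t Ht).
    + intros eps N Hr K HK.
      assert (Heps : 0 <= eps).
      { destruct (inR_nonempty (i :: l) u0) as [u Hu].
        eapply Rle_trans; [apply Cmod_ge_0|]. apply (Hr N (le_n N) u Hu). }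
      assert (Hm := is_RInt_minus (V := CC) (gK K) wt 0 1 (v K) If (HgK K) HIw).
      assert (Hc : is_RInt (V := R_NormedModule) (fun _ => eps) 0 1 eps).
      { pose proof (is_RInt_const (V := R_NormedModule) 0 1 eps) as K'.
        unfold scal in K'; simpl in K'; unfold mult in K'; simpl in K'.
        replace ((1 - 0) * eps) with eps in K' by ring. exact K'. }
      assert (Hb : forall x, 0 <= x <= 1 -> Cmod (Cminus (gK K x) (wt x)) <= eps).
      { intros x Hx.
        destruct (Rlt_dec 0 x) as [Ha|Ha]; [destruct (Rlt_dec x 1) as [Hb|Hb]|].
      * assert (Ht : 0 < x < 1) by lra. unfold gK, wt. rewrite !cut_in by auto.
        apply (proj2 (IHt x Ht)) with N; auto.
        intros K' HK' u Hu. apply Hr; auto. exists x; auto.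
      * unfold gK, wt. rewrite !cut_out by lra.
        change (Cmod (Cminus (RtoC 0) (RtoC 0)) <= eps). unfold Cminus. rewrite Cplus_opp_r, Cmod_0. auto.
      * unfold gK, wt. rewrite !cut_out by lra.
        change (Cmod (Cminus (RtoC 0) (RtoC 0)) <= eps). unfold Cminus. rewrite Cplus_opp_r, Cmod_0. auto. }
      assert (Hb' : forall x, 0 <= x <= 1 -> norm (K := R_AbsRing) (V := CC) (minus (gK K x) (wt x)) <= eps).
      { intros x Hx; rewrite normCC; apply Hb; auto. }
      rewrite <- normCC.
      exact (norm_RInt_le (V := CC) _ _ 0 1 _ _ Rle_0_1 Hb' Hm Hc).
Qed.

Fixpoint downfrom (o n : nat) : list nat :=
  match n with O => nil | S n' => (o + S n')%nat :: downfrom o n' end.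

Lemma downfrom_app : forall o n W, downfrom o (n + W) = downfrom (o + n) W ++ downfrom o n.
Proof.
  intros o n W. induction W as [|W IH].
  - rewrite Nat.add_0_r. reflexivity.
  - replace (n + S W)%nat with (S (n + W)) by lia. simpl. rewrite IH.
    f_equal. lia.
Qed.

Lemma In_downfrom : forall o n j, In j (downfrom o n) -> (o < j <= o + n)%nat.
Proof.
  intros o n; induction n as [|n IH]; intros j H; simpl in H.
  - destruct H.
  - destruct H as [H|H]. lia. apply IH in H. lia.
Qed.

Lemma upd_comm : forall u i j s t, i <> j -> upd (upd u i s) j t = upd (upd u j t) i s.
Proof.
  intros u i j s t H. apply functional_extensionality. intros k. unfold upd.
  destruct (Nat.eqb_spec k j); destruct (Nat.eqb_spec k i); subst; auto. contradiction.
Qed.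

Lemma ci_upd_comm : forall l F u0 k t, ~ In k l ->
  ci l (fun u => F (upd u k t)) u0 = ci l F (upd u0 k t).
Proof.
  induction l as [|i l IH]; intros F u0 k t H; simpl.
  - reflexivity.
  - f_equal. apply functional_extensionality. intros s.
    rewrite IH. rewrite upd_comm. reflexivity.
    intro; apply H; left; auto. intro; apply H; right; auto.
Qed.

Lemma cube_ci : forall w F, cube_int w F = ci (downfrom 0 w) F (fun _ => 0).
Proof.
  induction w as [|w IH]; intros F; simpl.
  - reflexivity.
  - f_equal. apply functional_extensionality. intros t. rewrite IH.
    apply ci_upd_comm. intros Hin. apply In_downfrom in Hin. lia.
Qed.

Definition cpow (x : C) (k : nat) : C := pow_n x k.
Lemma cpow_S : forall (x : C) k, cpow x (S k) = Cmult x (cpow x k).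
Proof. reflexivity. Qed.
Lemma cpow_O : forall (x : C), cpow x O = RtoC 1.
Proof. reflexivity. Qed.
Lemma Cmod_cpow : forall (x : C) k, Cmod (cpow x k) = Cmod x ^ k.
Proof. intros x k; induction k; [rewrite cpow_O; apply Cmod_1|]. rewrite cpow_S, Cmod_mult, IHk. reflexivity. Qed.
Lemma cpow_mult : forall (x y : C) k, cpow (Cmult x y) k = Cmult (cpow x k) (cpow y k).
Proof. intros x y k; induction k; [rewrite !cpow_O; ring|]. rewrite !cpow_S, IHk. ring. Qed.
Lemma cpow_RtoC : forall (r : R) k, cpow (RtoC r) k = RtoC (r ^ k).
Proof. intros r k; induction k; [reflexivity|]. rewrite cpow_S, IHk. simpl. rewrite RtoC_mult. reflexivity. Qed.
Lemma cpow_add : forall (x : C) a b, cpow x (a + b) = Cmult (cpow x a) (cpow x b).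
Proof. intros x a b; induction a; [rewrite Nat.add_0_l, cpow_O; ring|]. rewrite Nat.add_succ_l, !cpow_S, IHa. ring. Qed.

Fixpoint Uprod (u : nat -> R) (o n : nat) : R :=
  match n with O => 1 | S n' => u (o + S n')%nat * Uprod u o n' end.

Fixpoint Tt (ns : list nat) (xs : list C) (o a K : nat) (u : nat -> R) : C :=
  match ns, xs with
  | n :: ns', x :: xs' =>
      sum_n_m (fun k => Cmult (Cmult (cpow x k) (RtoC (Uprod u o n ^ (k - 1))))
                              (Tt ns' xs' (o + n) k K u)) (S a) K
  | _, _ => RtoC 1
  end.

Lemma Uprod_ext : forall u u' o n, (forall j, (o < j <= o + n)%nat -> u j = u' j) ->
  Uprod u o n = Uprod u' o n.
Proof.
  intros u u' o n; induction n as [|n IH]; intros H; simpl; auto.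
  rewrite H by lia. rewrite IH; auto. intros j Hj; apply H; lia.
Qed.

Lemma Tt_ext : forall ns xs o a K u u', (forall j, (o < j)%nat -> u j = u' j) ->
  Tt ns xs o a K u = Tt ns xs o a K u'.
Proof.
  induction ns as [|n ns IH]; intros xs o a K u u' H; simpl; auto.
  destruct xs as [|x xs]; auto.
  apply sum_n_m_ext. intros k. rewrite (Uprod_ext u u' o n) by (intros; apply H; lia).
  rewrite (IH xs (o + n)%nat k K u u'); auto. intros; apply H; lia.
Qed.

Lemma mono : forall n o k u0, (1 <= k)%nat ->
  ci_is (downfrom o n) (fun u => RtoC (Uprod u o n ^ (k - 1))) u0 (RtoC (/ INR k ^ n)).
Proof.
  intros n o k u0 Hk. assert (Hk0 : INR k <> 0) by (apply not_0_INR; lia).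
  revert u0. induction n as [|n IH]; intros u0.
  - eapply ci_is_val; [apply ci_is_nil|]. simpl. rewrite pow1. f_equal. field.
  - simpl downfrom.
    apply ci_cons with (g := fun t => RtoC (t ^ (k - 1) * / INR k ^ n)).
    + intros t Ht.
      eapply ci_is_val; [eapply ci_is_ext; [|apply (ci_is_scal _ _ _ _ (RtoC (t ^ (k - 1))) (IH (upd u0 (o + S n) t)))]|].
      * intros u Hu. simpl Uprod.
        rewrite (inR_out _ _ _ Hu (o + S n)%nat).
        unfold upd; rewrite Nat.eqb_refl. rewrite Rpow_mult_distr, RtoC_mult. reflexivity.
        intros Hin; apply In_downfrom in Hin; lia.
      * rewrite RtoC_mult. reflexivity.
    + apply is_RInt_RtoC.
      pose proof (is_RInt_scal (V := R_NormedModule) _ 0 1 (/ INR k ^ n) _ (is_RInt_pow 0 1 (k - 1))) as K1.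
      eapply (is_RInt_ext (V := R_NormedModule)) in K1.
      2: { intros x _. unfold scal; simpl; unfold mult; simpl. rewrite Rmult_comm. reflexivity. }
      replace (S (k - 1)) with k in K1 by lia. rewrite pow1, pow_i in K1 by lia.
      replace (/ INR k ^ S n) with (scal (V := R_NormedModule) (/ INR k ^ n) (1 / INR k - 0 / INR k)).
      exact K1.
      unfold scal; simpl; unfold mult; simpl. field. split; auto.
      apply pow_nonzero; auto.
Qed.

Lemma claimA : forall ns xs o a K u0,
  ci_is (downfrom o (weight ns)) (Tt ns xs o a K) u0 (Li_trunc ns xs a K).
Proof.
  induction ns as [|n ns IH]; intros xs o a K u0.
  - eapply ci_is_val; [apply ci_is_nil|]. reflexivity.
  - destruct xs as [|x xs].
    + eapply ci_is_ext; [|apply (ci_is_const _ u0 (RtoC 1))]. intros; reflexivity.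
    + unfold weight; simpl list_sum. rewrite downfrom_app.
      apply ci_is_app with (G := fun u => sum_n_m (fun k => Cmult (Cdiv (pow_n x k) (RtoC (INR k ^ n)))
                                   (Tt ns xs (o + n) k K u)) (S a) K).
      * intros u _. simpl Tt.
        apply (ci_is_sum (downfrom o n)
                 (fun k u' => Cmult (Cmult (cpow x k) (RtoC (Uprod u' o n ^ (k - 1))))
                              (Tt ns xs (o + n) k K u'))
                 u (fun k => Cmult (Cdiv (pow_n x k) (RtoC (INR k ^ n))) (Tt ns xs (o + n) k K u))).
        intros k Hk.
        eapply ci_is_val; [eapply ci_is_ext; [|apply (ci_is_scal _ _ _ _ (Cmult (cpow x k) (Tt ns xs (o + n) k K u)) (mono n o k u ltac:(lia)))]|].
        -- intros u' Hu'. rewrite (Tt_ext ns xs (o + n) k K u' u). ring.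
           intros j Hj. apply (inR_out _ _ _ Hu'). intros Hin; apply In_downfrom in Hin; lia.
        -- assert (Hk0 : INR k <> 0) by (apply not_0_INR; lia).
           rewrite RtoC_inv by (apply pow_nonzero; auto).
           unfold Cdiv. change (pow_n x k) with (cpow x k). ring.
      * apply (ci_is_sum _ (fun k u => Cmult (Cdiv (pow_n x k) (RtoC (INR k ^ n))) (Tt ns xs (o + n) k K u))
                 u0 (fun k => Cmult (Cdiv (pow_n x k) (RtoC (INR k ^ n))) (Li_trunc ns xs k K))).
        intros k Hk. apply ci_is_scal. apply IH.
Qed.

Fixpoint Qf (ns : list nat) (xs : list C) (o : nat) (u : nat -> R) : C :=
  match ns, xs with
  | n :: ns', x :: xs' => Cmult (Cmult x (RtoC (Uprod u o n))) (Qf ns' xs' (o + n) u)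
  | _, _ => RtoC 1
  end.

Fixpoint Df (ns : list nat) (xs : list C) (o : nat) (u : nat -> R) : C :=
  match ns, xs with
  | n :: ns', x :: xs' =>
      Cdiv (Cmult (Cmult x (Qf ns' xs' (o + n) u)) (Df ns' xs' (o + n) u))
           (Cminus (RtoC 1) (Cmult (Cmult x (RtoC (Uprod u o n))) (Qf ns' xs' (o + n) u)))
  | _, _ => RtoC 1
  end.

Lemma Uprod_bnd : forall u o n, (forall j, 0 <= u j <= 1) -> 0 <= Uprod u o n <= 1.
Proof.
  intros u o n H; induction n as [|n IH]; simpl; [lra|].
  destruct (H (o + S n)%nat). destruct IH. split. apply Rmult_le_pos; auto.
  rewrite <- (Rmult_1_l 1). apply Rmult_le_compat; auto.
Qed.

Lemma Cmod_sum : forall (f : nat -> C) n m,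
  Cmod (sum_n_m f n m) <= sum_n_m (fun k => Cmod (f k)) n m.
Proof.
  intros f n m. rewrite <- normCC.
  eapply Rle_trans; [apply (norm_sum_n_m (K := R_AbsRing) (V := CC))|].
  apply sum_n_m_le. intros k. rewrite normCC. lra.
Qed.

Lemma pow_le1 : forall r n, 0 <= r <= 1 -> r ^ n <= 1.
Proof. intros r n H; induction n; simpl; [lra|]. rewrite <- (Rmult_1_l 1). apply Rmult_le_compat; try lra. apply pow_le; lra. Qed.

Lemma geom_le : forall r, 0 <= r < 1 -> forall n m, sum_n_m (fun k => r ^ k) n m <= / (1 - r).
Proof.
  intros r Hr n m.
  assert (H : forall m n, (1 - r) * sum_n_m (fun k => r ^ k) n m <= 1 - r ^ S m).
  { clear n m. induction m as [|m IH]; intros n.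
    - destruct n.
      + rewrite sum_n_n. simpl. lra.
      + rewrite sum_n_m_zero by lia. change zero with 0. simpl. nra.
    - destruct (le_lt_dec n (S m)) as [Hn|Hn].
      + rewrite sum_n_Sm by auto. change (plus ?a ?b) with (a + b).
        specialize (IH n). simpl in *.
        assert (0 <= r ^ m) by (apply pow_le; lra). nra.
      + rewrite sum_n_m_zero by lia. change zero with 0.
        assert (r ^ S (S m) <= 1) by (apply pow_le1; lra). nra. }
  specialize (H m n). assert (0 <= r ^ S m) by (apply pow_le; lra).
  apply Rmult_le_reg_l with (1 - r). lra. rewrite Rinv_r by lra. lra.
Qed.

Ltac cring := match goal with |- @eq _ ?a ?b => change (@eq C a b) end; ring.
Lemma aux_mm : forall A B c d : C, Cplus (Cminus A B) (Cminus c d) = Cminus (Cplus A c) (Cplus B d).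
Proof. intros; ring. Qed.
Lemma aux_00 : RtoC 0 = Cminus (RtoC 0) (RtoC 0).
Proof. ring. Qed.

Lemma csum_minus : forall (f g : nat -> C) n m,
  sum_n_m (fun k => Cminus (f k) (g k)) n m = Cminus (sum_n_m f n m) (sum_n_m g n m).
Proof.
  intros f g n m. induction m as [|m IH].
  - destruct n.
    + rewrite !sum_n_n. reflexivity.
    + rewrite !sum_n_m_zero by lia. exact aux_00.
  - destruct (le_lt_dec n (S m)) as [Hn|Hn].
    + rewrite !sum_n_Sm by auto. rewrite IH. apply aux_mm.
    + rewrite !sum_n_m_zero by lia. exact aux_00.
Qed.

Lemma Cmod_1m : forall Q : C, 1 - Cmod Q <= Cmod (Cminus (RtoC 1) Q).
Proof.
  intros Q. assert (H := Cmod_triangle (Cminus (RtoC 1) Q) Q).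
  replace (Cplus (Cminus (RtoC 1) Q) Q) with (RtoC 1) in H by ring. rewrite Cmod_1 in H. lra.
Qed.

Lemma aux_0l : forall p : C, p = Cplus (RtoC 0) p.
Proof. intros; ring. Qed.
Lemma aux_assoc : forall S0 t P1 P2 : C, P1 = Cplus t P2 -> Cplus S0 P1 = Cplus (Cplus S0 t) P2.
Proof. intros S0 t P1 P2 H; rewrite H; ring. Qed.

Lemma geom_step : forall (x Q' D' : C) (U : R) m,
  Cminus (RtoC 1) (Cmult (Cmult x (RtoC U)) Q') <> RtoC 0 ->
  Cmult (cpow (Cmult (Cmult x (RtoC U)) Q') m)
        (Cdiv (Cmult (Cmult x Q') D') (Cminus (RtoC 1) (Cmult (Cmult x (RtoC U)) Q'))) =
  Cplus (Cmult (Cmult (cpow x (S m)) (RtoC (U ^ (S m - 1)))) (Cmult (cpow Q' (S m)) D'))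
        (Cmult (cpow (Cmult (Cmult x (RtoC U)) Q') (S m))
               (Cdiv (Cmult (Cmult x Q') D') (Cminus (RtoC 1) (Cmult (Cmult x (RtoC U)) Q')))).
Proof.
  intros x Q' D' U m Hne.
  replace (S m - 1)%nat with m by lia.
  rewrite !cpow_S, !cpow_mult, !cpow_RtoC.
  unfold Cdiv. field. auto.
Qed.

Lemma geom_id : forall (x Q' D' : C) (U : R) a j,
  Cminus (RtoC 1) (Cmult (Cmult x (RtoC U)) Q') <> RtoC 0 ->
  Cmult (cpow (Cmult (Cmult x (RtoC U)) Q') a)
        (Cdiv (Cmult (Cmult x Q') D') (Cminus (RtoC 1) (Cmult (Cmult x (RtoC U)) Q'))) =
  Cplus (sum_n_m (fun k => Cmult (Cmult (cpow x k) (RtoC (U ^ (k - 1)))) (Cmult (cpow Q' k) D')) (S a) (a + j))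
        (Cmult (cpow (Cmult (Cmult x (RtoC U)) Q') (a + j))
               (Cdiv (Cmult (Cmult x Q') D') (Cminus (RtoC 1) (Cmult (Cmult x (RtoC U)) Q')))).
Proof.
  intros x Q' D' U a j Hne. induction j as [|j IH].
  - rewrite Nat.add_0_r. rewrite sum_n_m_zero by lia. apply aux_0l.
  - rewrite IH. replace (a + S j)%nat with (S (a + j)) by lia.
    rewrite sum_n_Sm by lia. apply aux_assoc. apply geom_step. auto.
Qed.

Definition Md (r : R) (m : nat) : R := (/ (1 - r)) ^ m.
Fixpoint Cb (r : R) (m : nat) : R :=
  match m with O => 0 | S m' => Cb r m' / (1 - r) + Md r (S m') end.

Lemma Md_ge1 : forall r m, 0 <= r < 1 -> 1 <= Md r m.
Proof.
  intros r m Hr. unfold Md. induction m; simpl; [lra|].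
  assert (1 <= / (1 - r)). { rewrite <- Rinv_1. apply Rinv_le_contravar; lra. }
  nra.
Qed.

Lemma Cb_ge0 : forall r m, 0 <= r < 1 -> 0 <= Cb r m.
Proof.
  intros r m Hr; induction m; simpl; [lra|].
  assert (0 < / (1 - r)) by (apply Rinv_0_lt_compat; lra).
  assert (1 <= Md r (S m)) by (apply Md_ge1; auto).
  unfold Rdiv. assert (0 <= Cb r m * / (1 - r)) by (apply Rmult_le_pos; lra). lra.
Qed.

Lemma Qcons_bnd : forall (x Q' : C) (U r : R), Cmod x <= r -> Cmod Q' <= 1 -> 0 <= U <= 1 ->
  Cmod (Cmult (Cmult x (RtoC U)) Q') <= r.
Proof.
  intros x Q' U r Hx HQ HU. rewrite !Cmod_mult, Cmod_R, Rabs_pos_eq by lra.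
  assert (0 <= Cmod x) by apply Cmod_ge_0. assert (0 <= Cmod Q') by apply Cmod_ge_0.
  assert (Cmod x * U <= r) by nra. nra.
Qed.

Lemma Qf_bnd : forall r ns xs o u, 0 <= r <= 1 -> (forall j, 0 <= u j <= 1) ->
  List.Forall (fun x => Cmod x <= r) xs -> Cmod (Qf ns xs o u) <= 1.
Proof.
  intros r ns; induction ns as [|n ns IH]; intros xs o u Hr Hu Hx; simpl.
  - rewrite Cmod_1; lra.
  - destruct xs as [|x xs]. rewrite Cmod_1; lra.
    inversion Hx; subst. eapply Rle_trans. apply Qcons_bnd with (r := r); eauto.
    apply Uprod_bnd; auto. lra.
Qed.

Lemma Df_bnd : forall r ns xs o u, 0 <= r < 1 -> (forall j, 0 <= u j <= 1) ->
  List.Forall (fun x => Cmod x <= r) xs -> Cmod (Df ns xs o u) <= Md r (length ns).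
Proof.
  intros r ns; induction ns as [|n ns IH]; intros xs o u Hr Hu Hx; simpl.
  - rewrite Cmod_1; unfold Md; simpl; lra.
  - destruct xs as [|x xs]. rewrite Cmod_1; apply Md_ge1; auto.
    inversion Hx; subst.
    set (Q' := Qf ns xs (o + n) u).
    assert (HQ' : Cmod Q' <= 1) by (apply Qf_bnd with r; auto; lra).
    assert (HQ : Cmod (Cmult (Cmult x (RtoC (Uprod u o n))) Q') <= r).
    { apply Qcons_bnd; auto. apply Uprod_bnd; auto. }
    assert (HB := Cmod_1m (Cmult (Cmult x (RtoC (Uprod u o n))) Q')).
    assert (HBne : Cminus (RtoC 1) (Cmult (Cmult x (RtoC (Uprod u o n))) Q') <> RtoC 0).
    { intros E. rewrite E, Cmod_0 in HB. lra. }
    rewrite Cmod_div by auto. rewrite !Cmod_mult.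
    assert (HD := IH xs (o + n)%nat u Hr Hu H2).
    assert (0 <= Cmod x) by apply Cmod_ge_0. assert (0 <= Cmod Q') by apply Cmod_ge_0.
    assert (0 <= Cmod (Df ns xs (o + n) u)) by apply Cmod_ge_0.
    unfold Md. simpl. fold (Md r (length ns)).
    unfold Rdiv. rewrite Rmult_comm.
    apply Rmult_le_compat. apply Rlt_le, Rinv_0_lt_compat; lra.
    apply Rmult_le_pos; [apply Rmult_le_pos|]; auto.
    apply Rinv_le_contravar; lra.
    replace (Md r (length ns)) with (1 * 1 * Md r (length ns)) by ring.
    apply Rmult_le_compat; try apply Rmult_le_pos; auto.
    apply Rmult_le_compat; auto; lra.
Qed.

Lemma rsum_mult_r : forall (f : nat -> R) c n m,
  sum_n_m (fun k => f k * c) n m = sum_n_m f n m * c.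
Proof.
  intros f c n m. induction m as [|m IH].
  - destruct n.
    + rewrite !sum_n_n. reflexivity.
    + rewrite !sum_n_m_zero by lia. symmetry; apply Rmult_0_l.
  - destruct (le_lt_dec n (S m)) as [Hn|Hn].
    + rewrite !sum_n_Sm by auto. rewrite IH. symmetry; apply Rmult_plus_distr_r.
    + rewrite !sum_n_m_zero by lia. symmetry; apply Rmult_0_l.
Qed.

Lemma aux_sub3 : forall T S0 R0 : C, Cminus T (Cplus S0 R0) = Cminus (Cminus T S0) R0.
Proof. intros; ring. Qed.

Lemma Cmod_minus_le : forall a b : C, Cmod (Cminus a b) <= Cmod a + Cmod b.
Proof. intros a b. unfold Cminus. eapply Rle_trans; [apply Cmod_triangle|]. rewrite Cmod_opp. lra. Qed.

Lemma cpow_one : forall a, cpow (RtoC 1) a = RtoC 1.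
Proof. intros a. rewrite cpow_RtoC, pow1. reflexivity. Qed.

Lemma B3 : forall r ns xs o u a K, 0 <= r < 1 -> (forall j, 0 <= u j <= 1) ->
  List.Forall (fun x => Cmod x <= r) xs ->
  Cmod (Cminus (Tt ns xs o a K u) (Cmult (cpow (Qf ns xs o u) a) (Df ns xs o u)))
    <= Cb r (length ns) * r ^ K.
Proof.
  intros r ns; induction ns as [|n ns IH]; intros xs o u a K Hr Hu Hx.
  - simpl. rewrite cpow_one.
    replace (Cminus (RtoC 1) (Cmult (RtoC 1) (RtoC 1))) with (RtoC 0) by ring.
    rewrite Cmod_0. lra.
  - assert (HrK : 0 <= r ^ K) by (apply pow_le; lra).
    assert (HCb := Cb_ge0 r (length (n :: ns)) Hr).
    destruct xs as [|x xs].
    + simpl Tt. simpl Qf. simpl Df. rewrite cpow_one.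
      replace (Cminus (RtoC 1) (Cmult (RtoC 1) (RtoC 1))) with (RtoC 0) by ring.
      rewrite Cmod_0. apply Rmult_le_pos; auto.
    + inversion Hx; subst.
      set (U := Uprod u o n). set (Q' := Qf ns xs (o + n) u). set (D' := Df ns xs (o + n) u).
      assert (HU : 0 <= U <= 1) by (apply Uprod_bnd; auto).
      assert (HQ' : Cmod Q' <= 1) by (apply Qf_bnd with r; auto; lra).
      assert (HQ : Cmod (Cmult (Cmult x (RtoC U)) Q') <= r) by (apply Qcons_bnd; auto).
      assert (HB := Cmod_1m (Cmult (Cmult x (RtoC U)) Q')).
      assert (HBne : Cminus (RtoC 1) (Cmult (Cmult x (RtoC U)) Q') <> RtoC 0).
      { intros E. rewrite E, Cmod_0 in HB. lra. }
      assert (HD := Df_bnd r (n :: ns) (x :: xs) o u Hr Hu Hx).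
      change (Df (n :: ns) (x :: xs) o u) with
        (Cdiv (Cmult (Cmult x Q') D') (Cminus (RtoC 1) (Cmult (Cmult x (RtoC U)) Q'))) in *.
      change (Qf (n :: ns) (x :: xs) o u) with (Cmult (Cmult x (RtoC U)) Q').
      change (Tt (n :: ns) (x :: xs) o a K u) with
        (sum_n_m (fun k => Cmult (Cmult (cpow x k) (RtoC (U ^ (k - 1)))) (Tt ns xs (o + n) k K u)) (S a) K).
      set (Q := Cmult (Cmult x (RtoC U)) Q') in *.
      set (D := Cdiv (Cmult (Cmult x Q') D') (Cminus (RtoC 1) Q)) in *.
      assert (HDp : Cmod D <= Md r (S (length ns))) by exact HD.
      assert (HMd : 0 <= Md r (S (length ns))) by (pose proof (Md_ge1 r (S (length ns)) Hr); lra).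
      assert (HQK : forall j, (K <= j)%nat -> Cmod (Cmult (cpow Q j) D) <= r ^ K * Md r (S (length ns))).
      { intros j Hj. rewrite Cmod_mult, Cmod_cpow.
        apply Rmult_le_compat; auto. apply pow_le, Cmod_ge_0. apply Cmod_ge_0.
        apply Rle_trans with (r ^ j). apply pow_incr; split; auto; apply Cmod_ge_0.
        replace j with (K + (j - K))%nat by lia. rewrite pow_add.
        assert (r ^ (j - K) <= 1) by (apply pow_le1; lra). nra. }
      simpl length. simpl Cb.
      destruct (le_lt_dec K a) as [HKa|HKa].
      * rewrite sum_n_m_zero by lia.
        change (Cmod (Cminus (RtoC 0) (Cmult (cpow Q a) D)) <= (Cb r (length ns) / (1 - r) + Md r (S (length ns))) * r ^ K).
        replace (Cminus (RtoC 0) (Cmult (cpow Q a) D)) with (Copp (Cmult (cpow Q a) D)) by ring.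
        rewrite Cmod_opp. eapply Rle_trans; [apply HQK; auto|].
        assert (0 <= Cb r (length ns) / (1 - r)).
        { unfold Rdiv; apply Rmult_le_pos. apply Cb_ge0; auto. apply Rlt_le, Rinv_0_lt_compat; lra. }
        nra.
      * unfold D, Q. rewrite (geom_id x Q' D' U a (K - a) HBne). fold Q. fold D.
        replace (a + (K - a))%nat with K by lia.
        rewrite aux_sub3, <- csum_minus.
        eapply Rle_trans; [apply Cmod_minus_le|].
        assert (HS : Cmod (sum_n_m (fun k => Cminus
                   (Cmult (Cmult (cpow x k) (RtoC (U ^ (k - 1)))) (Tt ns xs (o + n) k K u))
                   (Cmult (Cmult (cpow x k) (RtoC (U ^ (k - 1)))) (Cmult (cpow Q' k) D'))) (S a) K)
                 <= Cb r (length ns) * r ^ K / (1 - r)).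
        { eapply Rle_trans; [apply Cmod_sum|].
          eapply Rle_trans.
          { apply sum_n_m_le with (b := fun k => r ^ k * (Cb r (length ns) * r ^ K)).
            intros k.
            replace (Cminus (Cmult (Cmult (cpow x k) (RtoC (U ^ (k - 1)))) (Tt ns xs (o + n) k K u))
                   (Cmult (Cmult (cpow x k) (RtoC (U ^ (k - 1)))) (Cmult (cpow Q' k) D')))
              with (Cmult (Cmult (cpow x k) (RtoC (U ^ (k - 1))))
                     (Cminus (Tt ns xs (o + n) k K u) (Cmult (cpow Q' k) D'))) by ring.
            rewrite !Cmod_mult, Cmod_cpow, Cmod_R, Rabs_pos_eq by (apply pow_le; lra).
            assert (H1' : Cmod x ^ k <= r ^ k) by (apply pow_incr; split; auto; apply Cmod_ge_0).
            assert (H2' : U ^ (k - 1) <= 1) by (apply pow_le1; lra).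
            assert (H3' := IH xs (o + n)%nat u k K Hr Hu H2).
            assert (0 <= Cmod x ^ k) by (apply pow_le, Cmod_ge_0).
            assert (0 <= U ^ (k - 1)) by (apply pow_le; lra).
            assert (0 <= Cmod (Cminus (Tt ns xs (o + n) k K u) (Cmult (cpow Q' k) D'))) by apply Cmod_ge_0.
            fold Q' D' in H3'.
            replace (r ^ k * (Cb r (length ns) * r ^ K)) with (r ^ k * 1 * (Cb r (length ns) * r ^ K)) by ring.
            apply Rmult_le_compat; auto. apply Rmult_le_pos; auto.
            apply Rmult_le_compat; auto. }
          rewrite rsum_mult_r.
          assert (Hg := geom_le r Hr (S a) K).
          assert (0 <= Cb r (length ns) * r ^ K) by (apply Rmult_le_pos; auto; apply Cb_ge0; auto).
          unfold Rdiv. rewrite (Rmult_comm _ (/ (1 - r))). apply Rmult_le_compat_r; auto. }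
        assert (HR := HQK K (le_n K)).
        unfold Rdiv in *. nra.
Qed.

Lemma csum_zero : forall (f : nat -> C) n m, (forall k, (n <= k <= m)%nat -> f k = RtoC 0) ->
  sum_n_m f n m = RtoC 0.
Proof.
  intros f n m H. transitivity (sum_n_m (fun _ => @zero C_AbelianGroup) n m).
  apply sum_n_m_ext_loc. intros k Hk. rewrite H by auto. reflexivity.
  rewrite sum_n_m_const_zero. reflexivity.
Qed.

Lemma cdet_S : forall n M, cdet (S n) M = sum_n_m (fun i : nat =>
        Cmult (Cmult (RtoC ((-1) ^ i)) (M O i))
              (cdet n (fun r c => M (S r) (if Nat.ltb c i then c else S c)))) 0 n.
Proof. reflexivity. Qed.

Lemma cdet_zero_col : forall n M, (forall r, (r < S n)%nat -> M r O = RtoC 0) -> cdet (S n) M = RtoC 0.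
Proof.
  induction n as [|n IH]; intros M H.
  - simpl. rewrite sum_n_n. rewrite H by lia. ring.
  - rewrite cdet_S. apply csum_zero. intros i Hi. destruct i as [|i].
    + rewrite H by lia. ring.
    + rewrite IH. ring. intros r Hr. simpl. rewrite H by lia. reflexivity.
Qed.

Lemma cprod_shift : forall f a n, cprod f (S a) n = cprod (fun r => f (S r)) a n.
Proof. intros f a n; revert a; induction n; intros a; simpl; auto. rewrite IHn. reflexivity. Qed.

Lemma cprod_ext : forall f g a n, (forall i, (a <= i < a + n)%nat -> f i = g i) -> cprod f a n = cprod g a n.
Proof.
  intros f g a n; revert a; induction n; intros a H; simpl; auto.
  rewrite H by lia. rewrite IHn; auto. intros i Hi; apply H; lia.
Qed.

Lemma cprod_mult : forall f g a n, Cmult (cprod f a n) (cprod g a n) = cprod (fun i => Cmult (f i) (g i)) a n.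
Proof. intros f g a n; revert a; induction n; intros a; simpl. ring. rewrite <- IHn. ring. Qed.

Lemma cprod_split : forall f a n m, cprod f a (n + m) = Cmult (cprod f a n) (cprod f (a + n) m).
Proof.
  intros f a n m; revert a; induction n; intros a; simpl.
  rewrite Nat.add_0_r. ring. rewrite IHn. replace (S a + n)%nat with (a + S n)%nat by lia. ring.
Qed.

Lemma aux_det : forall a X : C, Cplus (Cmult (Cmult (RtoC ((-1) ^ 0)) a) X) (RtoC 0) = Cmult a X.
Proof. intros. simpl. ring. Qed.

Lemma cdet_tri : forall n M, (forall r c, (c < r < n)%nat -> M r c = RtoC 0) ->
  cdet n M = cprod (fun r => M r r) 0 n.
Proof.
  induction n as [|n IH]; intros M H.
  - reflexivity.
  - rewrite cdet_S. destruct n as [|n'].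
    + rewrite sum_n_n. simpl. ring.
    + rewrite sum_Sn_m by lia.
      rewrite csum_zero.
      2: { intros i Hi. destruct i as [|i]; [lia|]. rewrite cdet_zero_col. ring.
           intros r Hr. simpl. apply H. lia. }
      change (cprod (fun r => M r r) 0 (S (S n'))) with (Cmult (M O O) (cprod (fun r => M r r) 1 (S n'))).
      rewrite cprod_shift. rewrite IH.
      2: { intros r c Hrc. simpl. apply H. lia. }
      apply aux_det.
Qed.

Lemma vcoord_upd : forall ns xs u k t i, i <> k -> vcoord ns xs (upd u k t) i = vcoord ns xs u i.
Proof. intros. unfold vcoord, upd. destruct (Nat.eqb_spec i k); [contradiction|reflexivity]. Qed.

Lemma Pj_upd_low : forall ns xs j u k t, (k < j)%nat -> Pj ns xs j (upd u k t) = Pj ns xs j u.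
Proof. intros. unfold Pj. apply cprod_ext. intros i Hi. apply vcoord_upd. lia. Qed.

Lemma pderiv_low : forall ns xs j u k, (k < j)%nat -> pderiv (Pj ns xs j) u k = RtoC 0.
Proof.
  intros. unfold pderiv.
  rewrite (Derive_ext _ (fun _ => fst (Pj ns xs j u))) by (intros; rewrite Pj_upd_low; auto).
  rewrite (Derive_ext (fun t => snd (Pj ns xs j (upd u k t))) (fun _ => snd (Pj ns xs j u))) by (intros; rewrite Pj_upd_low; auto).
  rewrite !Derive_const. reflexivity.
Qed.

Lemma Pj_step : forall ns xs j u, (1 <= j <= weight ns)%nat ->
  Pj ns xs j u = Cmult (vcoord ns xs u j) (Pj ns xs (S j) u).
Proof.
  intros ns xs j u Hj. unfold Pj.
  replace (weight ns + 1 - j)%nat with (S (weight ns - j)) by lia.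
  replace (weight ns + 1 - S j)%nat with (weight ns - j)%nat by lia. reflexivity.
Qed.

Lemma Derive_lin : forall a x, Derive (fun t => t * a) x = a.
Proof. intros. apply is_derive_unique. auto_derive; auto. ring. Qed.

Lemma pderiv_diag : forall ns xs j u, (1 <= j <= weight ns)%nat ->
  pderiv (Pj ns xs j) u j = Cmult (cmult ns xs j) (Pj ns xs (S j) u).
Proof.
  intros ns xs j u Hj. unfold pderiv.
  set (z := Cmult (cmult ns xs j) (Pj ns xs (S j) u)).
  assert (E : forall t, Pj ns xs j (upd u j t) = Cmult (RtoC t) z).
  { intros t. rewrite Pj_step by auto. rewrite Pj_upd_low by lia.
    unfold z, vcoord, upd. rewrite Nat.eqb_refl. ring. }
  rewrite (Derive_ext _ (fun t => t * fst z)).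
  rewrite (Derive_ext (fun t => snd (Pj ns xs j (upd u j t))) (fun t => t * snd z)).
  rewrite !Derive_lin. destruct z; reflexivity.
  intros t; rewrite E; destruct z; simpl; ring.
  intros t; rewrite E; destruct z; simpl; ring.
Qed.

Lemma Omega_prod : forall ns xs u,
  Omega_density ns xs u =
  cprod (fun j => Cmult (eta_coef ns xs j u) (Cmult (cmult ns xs j) (Pj ns xs (S j) u))) 1 (weight ns).
Proof.
  intros ns xs u. unfold Omega_density. rewrite cdet_tri.
  2: { intros r c Hrc. apply pderiv_low. lia. }
  rewrite <- cprod_mult. f_equal.
  rewrite cprod_shift. apply cprod_ext. intros i Hi. apply pderiv_diag. lia.
Qed.

Lemma cmult_aux_low : forall ns xs off j, List.Forall (fun n => (0 < n)%nat) ns -> (j <= off)%nat ->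
  cmult_aux ns xs off j = RtoC 1.
Proof.
  induction ns as [|n ns IH]; intros xs off j Hp Hj; destruct xs as [|x xs]; simpl; auto.
  inversion Hp; subst. destruct (Nat.eqb_spec j (off + n)); [lia|]. apply IH; auto. lia.
Qed.

Lemma is_start_low : forall ns off j, List.Forall (fun n => (0 < n)%nat) ns -> (j <= off)%nat ->
  is_start_aux ns off j = false.
Proof.
  induction ns as [|n ns IH]; intros off j Hp Hj; simpl; auto.
  inversion Hp; subst. destruct (Nat.eqb_spec j (off + 1)); [lia|]. simpl. apply IH; auto. lia.
Qed.

Lemma Uprod_bot : forall u m a, Uprod u a (S m) = u (S a) * Uprod u (S a) m.
Proof.
  intros u m; induction m as [|m IH]; intros a.
  - simpl. replace (a + 1)%nat with (S a) by lia. reflexivity.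
  - change (Uprod u a (S (S m))) with (u (a + S (S m))%nat * Uprod u a (S m)).
    rewrite IH. change (Uprod u (S a) (S m)) with (u (S a + S m)%nat * Uprod u (S a) m).
    replace (a + S (S m))%nat with (S a + S m)%nat by lia. ring.
Qed.

Lemma RtoC_neq0 : forall r, r <> 0 -> RtoC r <> RtoC 0.
Proof. intros r H E. apply H. apply (f_equal fst) in E. simpl in E. auto. Qed.

Lemma tel : forall (c P' : C) (uj : R), uj <> 0 ->
  Cmult (Cmult (Cinv (Cmult (Cmult c (RtoC uj)) P')) (Cmult c P')) (Cmult (Cmult c (RtoC uj)) P')
  = Cmult c P'.
Proof.
  intros c P' uj Hu.
  destruct (Classical_Prop.classic (Cmult c P' = RtoC 0)) as [E|E].
  - replace (Cmult (Cmult c (RtoC uj)) P') with (Cmult (RtoC uj) (Cmult c P')) by ring.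
    rewrite E. ring.
  - assert (Hc : c <> RtoC 0) by (intros Hc; apply E; rewrite Hc; ring).
    assert (HP : P' <> RtoC 0) by (intros HP; apply E; rewrite HP; ring).
    assert (Hu' := RtoC_neq0 uj Hu).
    field. auto.
Qed.

Definition fg ns0 xs0 u j :=
  Cmult (eta_coef ns0 xs0 j u) (Cmult (cmult ns0 xs0 j) (Pj ns0 xs0 (S j) u)).

Lemma blocks : forall ns0 xs0 u ns xs o,
  List.Forall (fun n => (0 < n)%nat) ns -> length xs = length ns ->
  (o + weight ns = weight ns0)%nat ->
  (forall j, (o < j)%nat -> cmult ns0 xs0 j = cmult_aux ns xs o j /\ is_start ns0 j = is_start_aux ns o j) ->
  (forall j, (o < j <= weight ns0)%nat -> u j <> 0) ->
  Pj ns0 xs0 (S o) u = Qf ns xs o u /\ cprod (fg ns0 xs0 u) (S o) (weight ns) = Df ns xs o u.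
Proof.
  intros ns0 xs0 u ns. induction ns as [|n ns IH]; intros xs o Hp Hl Hw Hinv Hu.
  - destruct xs; [|discriminate]. change (weight nil) with 0%nat in Hw.
    split; [|reflexivity]. unfold Pj. replace (weight ns0 + 1 - S o)%nat with O by lia. reflexivity.
  - destruct xs as [|x xs]; [discriminate|]. inversion Hp; subst. simpl in Hl. injection Hl as Hl.
    assert (HW : weight (n :: ns) = (n + weight ns)%nat) by reflexivity.
    rewrite HW in Hw.
    destruct (IH xs (o + n)%nat H2 Hl ltac:(lia)) as [IHP IHD].
    { intros j Hj. destruct (Hinv j ltac:(lia)) as [A B]. rewrite A, B. simpl.
      destruct (Nat.eqb_spec j (o + n)); [lia|]. destruct (Nat.eqb_spec j (o + 1)); [lia|]. auto. }
    { intros j Hj; apply Hu; lia. }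
    set (Q' := Qf ns xs (o + n) u) in *. set (D' := Df ns xs (o + n) u) in *.
    assert (Hcg : forall j, (o < j <= o + n)%nat -> cmult ns0 xs0 j = if Nat.eqb j (o + n) then x else RtoC 1).
    { intros j Hj. destruct (Hinv j ltac:(lia)) as [A _]. rewrite A. simpl.
      destruct (Nat.eqb j (o + n)); auto. apply cmult_aux_low; auto. lia. }
    assert (Hsg : forall j, (o < j <= o + n)%nat -> is_start ns0 j = Nat.eqb j (o + 1)).
    { intros j Hj. destruct (Hinv j ltac:(lia)) as [_ B]. rewrite B. simpl.
      rewrite (is_start_low ns (o + n) j H2) by lia. apply Bool.orb_false_r. }
    assert (Hst : forall j, (o < j <= o + n)%nat ->
              Pj ns0 xs0 j u = Cmult (Cmult (cmult ns0 xs0 j) (RtoC (u j))) (Pj ns0 xs0 (S j) u)).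
    { intros j Hj. rewrite Pj_step by lia. reflexivity. }
    assert (HPtop : Pj ns0 xs0 (S (o + n)) u = Q') by exact IHP.
    assert (Hi : forall d, (d < n)%nat ->
              Pj ns0 xs0 (o + n - d) u = Cmult (Cmult x (RtoC (Uprod u (o + n - S d) (S d)))) Q').
    { induction d as [|d IHd]; intros Hd.
      - rewrite Nat.sub_0_r. rewrite Hst by lia. rewrite Hcg by lia. rewrite Nat.eqb_refl.
        rewrite HPtop. simpl Uprod. replace (o + n - 1 + 1)%nat with (o + n)%nat by lia.
        rewrite Rmult_1_r. ring.
      - rewrite Hst by lia. rewrite Hcg by lia.
        destruct (Nat.eqb_spec (o + n - S d) (o + n)); [lia|].
        replace (S (o + n - S d)) with (o + n - d)%nat by lia. rewrite IHd by lia.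
        replace (o + n - S d)%nat with (S (o + n - S (S d))) at 1 by lia.
        rewrite (Uprod_bot u (S d) (o + n - S (S d))).
        replace (S (o + n - S (S d))) with (o + n - S d)%nat by lia.
        rewrite !RtoC_mult. ring. }
    assert (HQ : Pj ns0 xs0 (S o) u = Cmult (Cmult x (RtoC (Uprod u o n))) Q').
    { replace (S o) with (o + n - (n - 1))%nat by lia. rewrite Hi by lia.
      replace (o + n - S (n - 1))%nat with o by lia. replace (S (n - 1)) with n by lia. reflexivity. }
    split; [exact HQ|].
    assert (Hii : cprod (fg ns0 xs0 u) (S o) n =
                  Cmult (Cinv (Cminus (RtoC 1) (Pj ns0 xs0 (S o) u))) (Cmult x Q')).
    { destruct (Nat.eq_dec n 1) as [Hn1|Hn1].
      - subst n. simpl cprod. unfold fg, eta_coef. rewrite Hsg by lia.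
        rewrite (Hcg (S o)) by lia. replace (S o =? o + 1) with true by (symmetry; apply Nat.eqb_eq; lia).
        replace (S (S o)) with (S (o + 1)) by lia. rewrite HPtop. ring.
      - assert (HT : forall d, (S d < n)%nat ->
                  Cmult (cprod (fg ns0 xs0 u) (o + n - d) (S d)) (Pj ns0 xs0 (o + n - d) u) = Cmult x Q').
        { induction d as [|d IHd]; intros Hd.
          - rewrite Nat.sub_0_r. simpl cprod. unfold fg, eta_coef.
            rewrite Hsg by lia. destruct (Nat.eqb_spec (o + n) (o + 1)); [lia|].
            rewrite Hcg by lia. rewrite Nat.eqb_refl. rewrite HPtop.
            rewrite (Hst (o + n)%nat) by lia. rewrite Hcg by lia. rewrite Nat.eqb_refl. rewrite HPtop.
            rewrite Cmult_1_r. apply tel. apply Hu; lia.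
          - change (cprod (fg ns0 xs0 u) (o + n - S d) (S (S d))) with
              (Cmult (fg ns0 xs0 u (o + n - S d)) (cprod (fg ns0 xs0 u) (S (o + n - S d)) (S d))).
            replace (S (o + n - S d)) with (o + n - d)%nat by lia.
            unfold fg at 1, eta_coef. rewrite Hsg by lia.
            destruct (Nat.eqb_spec (o + n - S d) (o + 1)); [lia|].
            rewrite Hcg by lia. destruct (Nat.eqb_spec (o + n - S d) (o + n)); [lia|].
            replace (S (o + n - S d)) with (o + n - d)%nat by lia.
            rewrite (Hst (o + n - S d)%nat) by lia. rewrite Hcg by lia.
            destruct (Nat.eqb_spec (o + n - S d) (o + n)); [lia|].
            replace (S (o + n - S d)) with (o + n - d)%nat by lia.
            rewrite <- (IHd ltac:(lia)).
            set (X := cprod (fg ns0 xs0 u) (o + n - d) (S d)).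
            set (P' := Pj ns0 xs0 (o + n - d) u).
            assert (T := tel (RtoC 1) P' (u (o + n - S d)%nat) ltac:(apply Hu; lia)).
            set (Y := Cmult (Cmult (RtoC 1) (RtoC (u (o + n - S d)%nat))) P') in *.
            transitivity (Cmult X (Cmult (Cmult (Cinv Y) (Cmult (RtoC 1) P')) Y)). ring.
            rewrite T. ring. }
        replace n with (S (n - 1)) at 1 by lia. simpl cprod.
        unfold fg at 1, eta_coef. rewrite Hsg by lia. replace (S o =? o + 1) with true by (symmetry; apply Nat.eqb_eq; lia).
        rewrite Hcg by lia. destruct (Nat.eqb_spec (S o) (o + n)); [lia|].
        assert (HT' := HT (n - 2)%nat ltac:(lia)).
        replace (o + n - (n - 2))%nat with (S (S o)) in HT' by lia.
        replace (S (n - 2)) with (n - 1)%nat in HT' by lia.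
        rewrite <- HT'. ring. }
    rewrite HW, cprod_split. replace (S o + n)%nat with (S (o + n)) by lia.
    rewrite IHD, Hii, HQ. simpl Df. fold Q' D'. unfold Cdiv. ring.
Qed.

Lemma claimC : forall ns xs u, List.Forall (fun n => (0 < n)%nat) ns -> length xs = length ns ->
  (forall j, (0 < j <= weight ns)%nat -> u j <> 0) ->
  Omega_density ns xs u = Df ns xs 0 u.
Proof.
  intros ns xs u Hp Hl Hu. rewrite Omega_prod.
  destruct (blocks ns xs u ns xs 0 Hp Hl ltac:(lia)) as [_ H]; auto.
Qed.

Lemma downfrom_In : forall o n j, (o < j <= o + n)%nat -> In j (downfrom o n).
Proof.
  intros o n; induction n as [|n IH]; intros j Hj; simpl; [lia|].
  destruct (Nat.eq_dec j (o + S n)) as [E|E]; [left; auto|right; apply IH; lia].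
Qed.

Lemma exists_r : forall xs, List.Forall (fun x => Cmod x < 1) xs ->
  exists r, 0 <= r < 1 /\ List.Forall (fun x => Cmod x <= r) xs.
Proof.
  induction xs as [|x xs IH]; intros H.
  - exists 0. split; [lra|constructor].
  - inversion H; subst. destruct (IH H3) as [r [Hr Hf]].
    exists (Rmax (Cmod x) r). split.
    + split. apply Rle_trans with r; [lra|apply Rmax_r]. apply Rmax_lub_lt; lra.
    + constructor. apply Rmax_l.
      eapply List.Forall_impl; [|exact Hf]. intros y Hy. eapply Rle_trans; [exact Hy|apply Rmax_r].
Qed.

Lemma region : forall w u, inR (downfrom 0 w) (fun _ => 0) u ->
  (forall j, 0 <= u j <= 1) /\ (forall j, (0 < j <= w)%nat -> u j <> 0).
Proof.
  intros w u H. split.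
  - intros j. destruct (in_dec Nat.eq_dec j (downfrom 0 w)) as [Hin|Hin].
    + assert (K := inR_in _ _ _ H j Hin). lra.
    + rewrite (inR_out _ _ _ H j Hin). lra.
  - intros j Hj. assert (K := inR_in _ _ _ H j (downfrom_In 0 w j ltac:(lia))). lra.
Qed.

Theorem lemma9p2 (ns : list nat) (xs : list C) :
  List.Forall (fun n => (0 < n)%nat) ns ->
  List.length xs = List.length ns ->
  List.Forall (fun x => Cmod x < 1) xs ->
  is_Li ns xs (cube_int (weight ns) (Omega_density ns xs)).
Proof.
  intros Hp Hl Hx.
  destruct (exists_r xs Hx) as [r [Hr Hxr]].
  set (l := downfrom 0 (weight ns)).
  assert (H1 : forall K, ci_is l (Tt ns xs 0 0 K) (fun _ => 0) (Li_trunc ns xs 0 K)).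
  { intros K. apply claimA. }
  assert (Hb : forall K u, inR l (fun _ => 0) u ->
            Cmod (Cminus (Tt ns xs 0 0 K u) (Df ns xs 0 u)) <= Cb r (length ns) * r ^ K).
  { intros K u Hu. destruct (region _ _ Hu) as [Hu1 _].
    assert (B := B3 r ns xs 0 u 0 K Hr Hu1 Hxr). rewrite cpow_O, Cmult_1_l in B. exact B. }
  assert (H2 : forall eps, 0 < eps -> exists N, forall K, (N <= K)%nat -> forall u, inR l (fun _ => 0) u ->
            Cmod (Cminus (Tt ns xs 0 0 K u) (Df ns xs 0 u)) <= eps).
  { intros eps Heps.
    assert (HC := Cb_ge0 r (length ns) Hr).
    destruct (pow_lt_1_zero r ltac:(rewrite Rabs_pos_eq; lra) (eps / (Cb r (length ns) + 1)))
      as [N HN].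
    { apply Rdiv_lt_0_compat; lra. }
    exists N. intros K HK u Hu. eapply Rle_trans; [apply Hb; auto|].
    specialize (HN K HK). rewrite Rabs_pos_eq in HN by (apply pow_le; lra).
    assert (r ^ K * (Cb r (length ns) + 1) < eps).
    { apply Rmult_lt_reg_r with (/ (Cb r (length ns) + 1)). apply Rinv_0_lt_compat; lra.
      rewrite Rmult_assoc, Rinv_r by lra. rewrite Rmult_1_r. exact HN. }
    assert (0 <= r ^ K) by (apply pow_le; lra). nra. }
  destruct (ci_lim l (fun _ => 0) (fun K => Tt ns xs 0 0 K) (Df ns xs 0) (fun K => Li_trunc ns xs 0 K) H1 H2)
    as [vl [Hvl Hrate]].
  assert (E : cube_int (weight ns) (Omega_density ns xs) = vl).
  { rewrite cube_ci. fold l. rewrite (ci_ext l _ (Df ns xs 0)).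
    destruct Hvl; auto.
    intros u Hu. destruct (region _ _ Hu) as [_ Hu2]. apply claimC; auto. }
  rewrite E. unfold is_Li.
  intros P [eps HP].
  destruct (H2 (eps / 2)) as [N HN]. destruct eps; simpl; lra.
  exists N. intros K HK. apply HP.
  apply (norm_compat1 (V := CC)). rewrite normCC.
  apply Rle_lt_trans with (eps / 2). apply (Hrate (eps / 2) N HN K HK).
  destruct eps; simpl; lra.
Qed.
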